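(* Let $\mathcal{A}_1,\mathcal{A}_2$ be cyclic finite automata each with at most $m$ states, let $d$ be a multiple of $(m^2)!$, and let $v\in(\Sigma^d)^*$. If $\downarrow_{\preceq_d}v^*\in\mathrm{Adh}_{\preceq_d}(L(\mathcal{A}_i))$ for $i=1,2$, then there is $w\in(\Sigma^d)^*$ such that (i) $\downarrow_{\preceq_d}v^*\subseteq\downarrow_{\preceq_d}w^*$, (ii) $\downarrow_{\preceq_d}w^*\in\mathrm{Adh}_{\preceq_d}(L(\mathcal{A}_i))$ for $i=1,2$, and (iii) $\pi_d(w)\le m^2$.
   Context: A finite automaton is cyclic if it has exactly one initial state and its set of final states equals its set of initial states. $u\preceq_d v$ iff $u=u_0\cdots u_n$ and $v=u_0v_1u_1\cdots v_nu_n$ with every $|v_i|$ divisible by $d$. An ideal is a nonempty, downward closed, directed set; $\mathrm{Adh}_{\preceq_d}(L)$ is the set of $\preceq_d$-ideals $I$ with $I\subseteq\downarrow_{\preceq_d}(L\cap I)$. For $w\in\Sigma^*$ and $i\in[1,d]$, $\kappa_d(w)(i)$ is the set of letters occurring in $w$ at a position $p\equiv i\pmod d$ (positions from $1$). $\pi_d(w)$ is the smallest $t\in[1,d]$ dividing $d$ such that $\kappa_d(w)(i+t)=\kappa_d(w)(i)$ for all $i\in[1,d-t]$. *)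

(* Defs.v *)
From mathcomp Require Import all_boot.
Set Implicit Arguments. Unset Strict Implicit. Unset Printing Implicit Defensive.

Record nfa (S : finType) := NFA {
  state : finType;
  init : {set state};
  final : {set state};
  trans : state -> S -> state -> bool }.

Fixpoint run (S : finType) (A : nfa S) (p : state A) (w : seq S) (q : state A) : bool :=
  match w with
  | [::] => p == q
  | a :: w' => [exists r : state A, @trans S A p a r && @run S A r w' q]
  end.

Definition lang (S : finType) (A : nfa S) (w : seq S) : Prop :=
  exists p q, [/\ p \in init A, q \in final A & @run S A p w q].

Definition cyclic_nfa (S : finType) (A : nfa S) : Prop :=
  exists q, init A = [set q] /\ final A = init A.

(* u <=_d v iff u = u0 u1 ... un and v = u0 v1 u1 ... vn un with d | |v_i|;
   the pairs in ps are (v_i, u_i). *)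
Definition subd (S : finType) (d : nat) (u v : seq S) : Prop :=
  exists (u0 : seq S) (ps : seq (seq S * seq S)),
    [/\ u = u0 ++ flatten [seq p.2 | p <- ps],
        v = u0 ++ flatten [seq p.1 ++ p.2 | p <- ps]
      & all (fun p => d %| size p.1) ps].

Definition dclosure (S : finType) (d : nat) (X : seq S -> Prop) : seq S -> Prop :=
  fun u => exists x, X x /\ subd d u x.

Definition is_ideal (S : finType) (d : nat) (I : seq S -> Prop) : Prop :=
  [/\ exists x, I x,
      (forall u v, I v -> subd d u v -> I u)
    & (forall x y, I x -> I y -> exists z, [/\ I z, subd d x z & subd d y z])].

Definition in_adh (S : finType) (d : nat) (L I : seq S -> Prop) : Prop :=
  is_ideal d I /\ (forall u, I u -> dclosure d (fun x => L x /\ I x) u).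

Definition star (S : finType) (v : seq S) : seq S -> Prop :=
  fun x => exists k, x = flatten (nseq k v).

(* kappa_d(w)(i): letters at positions p (from 1) with p = i mod d *)
Definition kappa (S : finType) (d : nat) (w : seq S) (i : nat) : {set S} :=
  [set a | [exists p : 'I_(size w), (tnth (in_tuple w) p == a) && (p.+1 == i %[mod d])]].

Definition pi_d (S : finType) (d : nat) (w : seq S) : nat :=
  head d [seq t <- iota 1 d | (t %| d) &&
          all (fun i => kappa d w (i + t) == kappa d w i) (iota 1 (d - t))].

(* Main.v *)
Require Import Defs.
From mathcomp Require Import all_boot.
From mathcomp Require Import zify.
Set Implicit Arguments. Unset Strict Implicit. Unset Printing Implicit Defensive.

Lemma dvd_mod0 d n : (d %| n) = (n %% d == 0).
Proof. by []. Qed.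

Lemma eqmodD d a b c e : a = b %[mod d] -> c = e %[mod d] -> a + c = b + e %[mod d].
Proof. by move=> H1 H2; rewrite -modnDm H1 H2 modnDm. Qed.

Lemma eqmod_dvd0 d a b : d %| b -> a + b = a %[mod d].
Proof. by move=> H; rewrite -modnDmr (eqP H) addn0. Qed.

Lemma eqmod_dvdl d a b : d %| b -> b + a = a %[mod d].
Proof. by move=> H; rewrite addnC eqmod_dvd0. Qed.

Lemma eqmod_sym d a b : a = b %[mod d] -> b = a %[mod d].
Proof. by []. Qed.

Definition occ (S : finType) (d o : nat) (z : seq S) (a : S) (r : nat) : Prop :=
  exists i, [/\ i < size z, nth a z i = a & o + i = r %[mod d]].

Definition compat (S : finType) (d : nat) (K : nat -> S -> Prop) (o : nat) (z : seq S) :=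
  forall a r, occ d o z a r -> K r a.

Inductive emb (S : finType) (d : nat) : seq S -> seq S -> Prop :=
 | emb_nil y : d %| size y -> emb d [::] y
 | emb_cons a u z y : d %| size z -> emb d u y -> emb d (a :: u) (z ++ a :: y).

Lemma occ_cat (S : finType) d o (s1 s2 : seq S) a r :
  occ d o (s1 ++ s2) a r <-> occ d o s1 a r \/ occ d (o + size s1) s2 a r.
Proof.
split.
- case=> i [Hi Hn Hm]; rewrite nth_cat in Hn.
  case: (ltnP i (size s1)) => Hc.
  + by left; exists i; rewrite Hc in Hn.
  + right; exists (i - size s1); rewrite ltnNge Hc /= in Hn; split => //.
    * by rewrite size_cat in Hi; rewrite ltn_subLR.
    * by rewrite -addnA subnKC.
- case=> [[i [Hi Hn Hm]]|[i [Hi Hn Hm]]].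
  + by exists i; rewrite size_cat nth_cat Hi; split => //; apply: leq_trans Hi (leq_addr _ _).
  + exists (size s1 + i); rewrite nth_cat [_ < size s1]ltnNge leq_addr /= addKn size_cat addnA.
    by split => //; rewrite ltn_add2l.
Qed.

Lemma occ_cons (S : finType) d o (b : S) z a r :
  occ d o (b :: z) a r <-> (b = a /\ o = r %[mod d]) \/ occ d o.+1 z a r.
Proof.
have E : b :: z = [:: b] ++ z by [].
split.
- rewrite E => /occ_cat; rewrite addn1; case=> H; last by right.
  by left; case: H => i [Hi Hn Hm]; case: i Hi Hn Hm => // _; rewrite addn0.
- rewrite E; case=> H; apply/occ_cat; [left|right; by rewrite addn1].
  by case: H => <- H; exists 0; rewrite addn0.
Qed.

Lemma occ_nil (S : finType) d o a r : ~ occ d o ([::] : seq S) a r.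
Proof. by case=> i []. Qed.

Lemma occ_mod (S : finType) d o o' (z : seq S) a r r' :
  o = o' %[mod d] -> r = r' %[mod d] -> occ d o z a r -> occ d o' z a r'.
Proof.
move=> Ho Hr [i [Hi Hn Hm]]; exists i; split => //.
by rewrite -Hr -Hm; apply: eqmodD.
Qed.

Lemma compat_mod (S : finType) d (K : nat -> S -> Prop) o o' z :
  o = o' %[mod d] -> compat d K o z -> compat d K o' z.
Proof. by move=> H C a r Ho; apply: C; apply: occ_mod Ho. Qed.

Lemma compat_cat (S : finType) d K o (s1 s2 : seq S) :
  compat d K o (s1 ++ s2) <-> compat d K o s1 /\ compat d K (o + size s1) s2.
Proof.
split.
- by move=> C; split => a r H; apply: C; apply/occ_cat; [left|right].
- by case=> C1 C2 a r /occ_cat [] H; [apply: C1|apply: C2].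
Qed.

Lemma compat_cons1 (S : finType) d K o (b : S) z :
  compat d K o (b :: z) -> K o b.
Proof. by move=> C; apply: C; apply/occ_cons; left. Qed.

Lemma compat_cons2 (S : finType) d K o (b : S) z :
  compat d K o (b :: z) -> compat d K o.+1 z.
Proof. by move=> C a r H; apply: C; apply/occ_cons; right. Qed.

Definition modresp (S : finType) d (K : nat -> S -> Prop) :=
  forall r r' a, r = r' %[mod d] -> K r a -> K r' a.

Lemma compat_consI (S : finType) d K o (b : S) z :
  modresp d K -> K o b -> compat d K o.+1 z -> compat d K o (b :: z).
Proof.
move=> M Hb C a r /occ_cons [[<- H]|H]; last by apply: C.
by apply: M Hb.
Qed.

Lemma dvd_eqmod d a b : a = b %[mod d] -> (d %| a) = (d %| b).
Proof. by move=> H; rewrite /dvdn H. Qed.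

Lemma emb_size (S : finType) d (u x : seq S) : emb d u x -> size u = size x %[mod d] /\ size u <= size x.
Proof.
elim=> [y Hy|a u' z y Hz _ [IH1 IH2]] /=.
- by rewrite mod0n (eqP Hy).
- rewrite size_cat /=; split; last by rewrite addnS ltnS (leq_trans IH2) // leq_addl.
  rewrite -addn1 -(addn1 (size y)) (eqmod_dvdl (size y + 1) Hz).
  by apply: eqmodD.
Qed.

Lemma emb_occ (S : finType) d o (u x : seq S) a r : emb d u x -> occ d o u a r -> occ d o x a r.
Proof.
move=> E; elim: E o => [y Hy|b u' z y Hz _ IH] o; first by move/occ_nil.
move/occ_cons => [[<- Hm]|H].
- apply/occ_cat; right; apply/occ_cons; left; split => //.
  by rewrite eqmod_dvd0.
- apply/occ_cat; right; apply/occ_cons; right.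
  move: (IH _ H); apply: occ_mod => //.
  by rewrite -addSn eqmod_dvd0.
Qed.

Lemma emb_subd (S : finType) d (u x : seq S) : emb d u x -> subd d u x.
Proof.
elim=> [y Hy|a u' z y Hz _ [u0 [ps [E1 E2 E3]]]].
- by exists [::], [:: (y, [::])]; split => //=; rewrite ?cats0 ?andbT.
- exists [::], ((z, a :: u0) :: ps); split => /=.
  + by rewrite E1.
  + by rewrite E2 -catA.
  + by rewrite Hz.
Qed.

Lemma emb_prepend (S : finType) d (z u x : seq S) : d %| size z -> emb d u x -> emb d u (z ++ x).
Proof.
move=> Hz; case=> [y Hy|a u' z' y Hz' E].
- by constructor; rewrite size_cat dvdn_add.
- by rewrite catA; constructor => //; rewrite size_cat dvdn_add.
Qed.

Lemma emb_prefix (S : finType) d (c u x : seq S) : emb d u x -> emb d (c ++ u) (c ++ x).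
Proof.
move=> E; elim: c => //= a c IH.
by rewrite -[a :: (c ++ x)]cat0s; constructor.
Qed.

Lemma subd_emb (S : finType) d (u x : seq S) : subd d u x -> emb d u x.
Proof.
case=> u0 [ps [-> -> H]]; apply: emb_prefix.
elim: ps H => [|[v1 u1] ps IH] /=; first by constructor.
move/andP=> [H1 H2]; rewrite -catA; apply: emb_prepend => //.
by apply: emb_prefix; apply: IH.
Qed.

Lemma occ_resp (S : finType) d o (z : seq S) : modresp d (fun r a => occ d o z a r).
Proof. by move=> r r' a H; apply: occ_mod. Qed.

Lemma dvd_pow (S : finType) d (v : seq S) k : d %| size v -> d %| size (flatten (nseq k v)).
Proof. by move=> H; elim: k => //= k IH; rewrite size_cat dvdn_add. Qed.

Lemma occ_pow (S : finType) d (v : seq S) k o a r : d %| size v ->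
  occ d o (flatten (nseq k v)) a r -> occ d o v a r.
Proof.
move=> Hv; elim: k o => [|k IH] o /=; first by move/occ_nil.
move/occ_cat => [//|/IH]; apply: occ_mod => //.
by rewrite eqmod_dvd0.
Qed.

Definition Kof (S : finType) d (v : seq S) := fun r a => occ d 0 v a r.

Lemma char_fwd (S : finType) d (v u : seq S) : d %| size v ->
  dclosure d (star v) u -> d %| size u /\ compat d (Kof d v) 0 u.
Proof.
move=> Hv [x [[k ->] /subd_emb E]]; split.
- by case: (emb_size E) => H _; rewrite (dvd_eqmod H) dvd_pow.
- move=> a r H; apply: (occ_pow (k := k)) => //.
  exact: emb_occ E H.
Qed.

Lemma build_pow (S : finType) d (v : seq S) : d %| size v ->
  forall u o t, compat d (Kof d v) o u -> d %| o + size u -> d %| o + size t ->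
  emb d u (t ++ flatten (nseq (size u) v)).
Proof.
move=> Hv; elim=> [|a u IH] o t C H1 H2 /=.
- by apply: emb_nil; rewrite cats0 -(dvdn_addr _ (H1 : d %| o + 0)) addn0.
- case: (compat_cons1 C) => i [Hi Hn Hm]; rewrite add0n in Hm.
  have Ev : v = take i v ++ a :: drop i.+1 v.
    by have := drop_nth a Hi; rewrite Hn => <-; rewrite cat_take_drop.
  rewrite {1}Ev -catA /= catA; constructor.
  + rewrite size_cat size_takel ?(ltnW Hi) // (dvd_eqmod (eqmodD (erefl (size t %% d)) Hm)).
    by rewrite addnC.
  + apply: IH.
    * exact: compat_cons2 C.
    * by rewrite addSn -addnS.
    * rewrite size_drop addSn -addnS subnSK //.
      rewrite -(dvd_eqmod (eqmodD Hm (erefl ((size v - i) %% d)))).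
      by rewrite subnKC // ltnW.
Qed.

Lemma char_bwd (S : finType) d (v u : seq S) : d %| size v ->
  d %| size u -> compat d (Kof d v) 0 u -> dclosure d (star v) u.
Proof.
move=> Hv Hu C; exists (flatten (nseq (size u) v)); split; first by exists (size u).
apply: emb_subd; rewrite -[flatten _]cat0s.
by apply: (build_pow Hv C).
Qed.

Lemma is_ideal_w (S : finType) d (w : seq S) : d %| size w -> is_ideal d (dclosure d (star w)).
Proof.
move=> Hw; split.
- by exists [::]; apply: char_bwd => // a r [i []].
- move=> u x /(char_fwd Hw) [Hx C] /subd_emb E; apply: char_bwd => //.
  + by case: (emb_size E) => H _; rewrite (dvd_eqmod H).
  + by move=> a r H; apply: C; apply: emb_occ E H.
- move=> x y /(char_fwd Hw) [Hx Cx] /(char_fwd Hw) [Hy Cy]; exists (x ++ y); split.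
  + apply: char_bwd => //; first by rewrite size_cat dvdn_add.
    apply/compat_cat; split => //; apply: compat_mod Cy.
    by rewrite add0n (eqP Hx) mod0n.
  + apply: emb_subd; rewrite -{1}[x]cats0; apply: emb_prefix; exact: emb_nil.
  + apply: emb_subd; apply: emb_prepend => //.
    rewrite -[y]cats0; apply: emb_prefix; exact: emb_nil.
Qed.

Lemma run_catP (S : finType) (A : nfa S) (p : state A) (w1 w2 : seq S) r :
  run p (w1 ++ w2) r <-> exists s, run p w1 s /\ run s w2 r.
Proof.
elim: w1 p => [|a w IH] p /=.
- by split; [move=> H; exists p|case=> s [/eqP -> H]].
- split.
  + case/existsP=> s' /andP [Ht /IH [s [H1 H2]]].
    by exists s; split => //; apply/existsP; exists s'; rewrite Ht.
  + case=> s [/existsP [s' /andP [Ht H1]] H2]; apply/existsP; exists s'.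
    by rewrite Ht /=; apply/IH; exists s.
Qed.

Lemma run_cons (S : finType) (A : nfa S) (p : state A) a (w : seq S) r :
  run p (a :: w) r <-> exists s, trans p a s /\ run s w r.
Proof.
split => /=.
- by case/existsP=> s /andP [H1 H2]; exists s.
- by case=> s [H1 H2]; apply/existsP; exists s; rewrite H1.
Qed.

Lemma lang_cyc (S : finType) (A : nfa S) (q : state A) (y : seq S) :
  init A = [set q] -> final A = init A -> (lang A y <-> run q y q).
Proof.
move=> Hi Hf; split.
- by case=> p [r []]; rewrite Hf Hi !inE => /eqP -> /eqP ->.
- by move=> H; exists q, q; rewrite Hf Hi !inE.
Qed.

Lemma run_states (S : finType) (A : nfa S) (p : state A) (x : seq S) (q : state A) : run p x q ->
  exists st : nat -> state A, [/\ st 0 = p, st (size x) = q &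
    forall j j', j <= j' <= size x -> run (st j) (take (j' - j) (drop j x)) (st j')].
Proof.
elim: x p => [|a x IH] p.
- move=> /= /eqP <-; exists (fun _ => p); split => // j j' _.
- case/run_cons=> r [Ht /IH [st [H0 H1 H2]]].
  exists (fun j => if j is k.+1 then st k else p); split => //.
  move=> [|k] [|k'] //=.
  + move=> Hk; apply/existsP; exists r; rewrite Ht /=.
    by have := H2 0 k'; rewrite H0 subn0 drop0; apply.
  + by move=> Hk; rewrite subSS; apply: H2.
Qed.

Definition Reach (S : finType) (A : nfa S) d (K : nat -> S -> Prop) (s : state A) r (s' : state A) r' :=
  exists z, [/\ run s z s', compat d K r z & r + size z = r' %[mod d]].

Lemma Reach_refl (S : finType) (A : nfa S) d K (s : state A) r : Reach d K s r s r.
Proof. exists [::]; split; [exact: eqxx | by move=> a r' [i []] | by rewrite addn0]. Qed.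

Lemma Reach_trans (S : finType) (A : nfa S) d K (s1 s2 s3 : state A) r1 r2 r3 :
  Reach d K s1 r1 s2 r2 -> Reach d K s2 r2 s3 r3 -> Reach d K s1 r1 s3 r3.
Proof.
case=> z1 [R1 C1 M1] [z2 [R2 C2 M2]]; exists (z1 ++ z2); split.
- by apply/run_catP; exists s2.
- apply/compat_cat; split => //; exact: compat_mod C2.
- by rewrite size_cat addnA -M2; apply: eqmodD.
Qed.

Lemma Reach_mod (S : finType) (A : nfa S) d K (s s' : state A) r1 r2 r1' r2' :
  r1 = r2 %[mod d] -> r1' = r2' %[mod d] -> Reach d K s r1 s' r1' -> Reach d K s r2 s' r2'.
Proof.
move=> H1 H2 [z [R C M]]; exists z; split => //; first exact: compat_mod C.
by rewrite -H2 -M; apply: eqmodD.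
Qed.

Lemma Reach_mono (S : finType) (A : nfa S) d (K K' : nat -> S -> Prop) (s s' : state A) r r' :
  (forall r a, K r a -> K' r a) -> Reach d K s r s' r' -> Reach d K' s r s' r'.
Proof. by move=> HK [z [R C M]]; exists z; split => // a rr H; apply: HK; apply: C. Qed.

Lemma Reach_shift (S : finType) (A : nfa S) d (K : nat -> S -> Prop) t (s s' : state A) r r' :
  modresp d K -> (forall r a, K r a -> K (r + t) a) ->
  Reach d K s r s' r' -> Reach d K s (r + t) s' (r' + t).
Proof.
move=> M P [z [R C Mz]]; exists z; split => //.
- move=> a rho [i [Hi Hn Hm]].
  have : K (r + i) a by apply: C; exists i; split.
  move/P; apply: M; rewrite -Hm.
  by rewrite addnAC.
- by rewrite addnAC; apply: eqmodD.
Qed.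

Lemma Reach_shiftn (S : finType) (A : nfa S) d (K : nat -> S -> Prop) t n (s s' : state A) r r' :
  modresp d K -> (forall r a, K r a -> K (r + t) a) ->
  Reach d K s r s' r' -> Reach d K s (r + n * t) s' (r' + n * t).
Proof.
move=> M P H; elim: n => [|n IH]; first by rewrite !addn0.
by rewrite mulSn !addnA [r + t + _]addnAC [r' + t + _]addnAC; apply: Reach_shift.
Qed.

Lemma compat_seg (S : finType) d K o (x : seq S) j n :
  j <= size x -> compat d K o x -> compat d K (o + j) (take n (drop j x)).
Proof.
move=> Hj; rewrite -{1}(cat_take_drop j x) => /compat_cat [_].
rewrite size_takel // -{1}(cat_take_drop n (drop j x)).
by case/compat_cat.
Qed.

Lemma segs (S : finType) (A : nfa S) d K (q : state A) (x : seq S) :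
  run q x q -> compat d K 0 x -> d %| size x ->
  exists st : nat -> state A, [/\ st 0 = q, st (size x) = q &
    forall j j', j <= j' <= size x -> Reach d K (st j) j (st j') j'].
Proof.
move=> R C Hx; case: (run_states R) => st [H0 H1 H2]; exists st; split => //.
move=> j j' /andP [Hjj Hj']; exists (take (j' - j) (drop j x)); split.
- by apply: H2; rewrite Hjj.
- by have := compat_seg (n := j' - j) (leq_trans Hjj Hj') C; rewrite add0n.
- rewrite size_takel ?subnKC // size_drop leq_sub2r //.
Qed.

Lemma inv_mult d t n : 0 < d -> 0 < t -> t %| d -> exists n', n * t + n' * t = 0 %[mod d].
Proof.
move=> Hd Ht Htd; exists (n * (d %/ t).-1).
have Hk : 0 < d %/ t by rewrite divn_gt0 // dvdn_leq.
rewrite -mulnDl -{1}(muln1 n) -mulnDr add1n prednK // -mulnA divnK //.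
by rewrite modnMl mod0n.
Qed.

Definition gadgets (S : finType) (A : nfa S) d (K : nat -> S -> Prop) (q : state A) :=
  forall r a, K r a -> exists s1 s2, [/\ trans s1 a s2, Reach d K q 0 s1 r & Reach d K s2 r.+1 q 0].

Lemma core (S : finType) (A : nfa S) d (K K' : nat -> S -> Prop) t (q : state A) :
  0 < d -> 0 < t -> t %| d ->
  modresp d K' ->
  (forall r a, K' r a -> K' (r + t) a) ->
  (forall r a, K' r a -> exists c, K (r + c * t) a) ->
  (forall r a, K r a -> exists s1 s2, [/\ trans s1 a s2, Reach d K' q 0 s1 r & Reach d K' s2 r.+1 q 0]) ->
  (exists s r, [/\ Reach d K' q 0 s r, Reach d K' s r q 0 & Reach d K' s r s (r + t)]) ->
  gadgets d K' q.
Proof.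
move=> Hd Ht Htd M' Per Back Hall [s [r [Hqs Hsq Hl]]].
have loopn : forall n, Reach d K' s r s (r + n * t).
  elim=> [|n IH]; first by rewrite addn0; apply: Reach_refl.
  apply: Reach_trans IH _.
  have := Reach_shiftn n M' Per Hl.
  by rewrite mulSn [t + _]addnC addnA [r + t + _]addnAC.
have qq : forall n, Reach d K' q 0 q (n * t).
  move=> n; apply: Reach_trans Hqs _; apply: Reach_trans (loopn n) _.
  by have := Reach_shiftn n M' Per Hsq; rewrite add0n.
have qqb : forall n, Reach d K' q (n * t) q 0.
  move=> n; case: (inv_mult n Hd Ht Htd) => n' Hn'.
  have := Reach_shiftn n M' Per (qq n'); rewrite add0n.
  by apply: Reach_mod => //; rewrite addnC Hn'.
move=> r0 a /Back [c Hc]; case: (Hall _ _ Hc) => s1 [s2 [Htr R1 R2]].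
case: (inv_mult c Hd Ht Htd) => n' Hn'.
exists s1, s2; split => //.
- apply: Reach_trans (qq n') _.
  have := Reach_shiftn n' M' Per R1; rewrite add0n.
  apply: Reach_mod => //.
  by rewrite -addnA -modnDmr Hn' mod0n addn0.
- apply: Reach_trans _ (qqb n').
  have := Reach_shiftn n' M' Per R2; rewrite add0n.
  apply: Reach_mod => //.
  by rewrite addSn -addnA -addSn -modnDmr Hn' mod0n addn0.
Qed.

Lemma build_adh (S : finType) (A : nfa S) d (K : nat -> S -> Prop) (q : state A) :
  modresp d K -> gadgets d K q ->
  forall u o, compat d K o u -> d %| o + size u ->
  exists y1 y2, [/\ run q (y1 ++ y2) q, compat d K 0 (y1 ++ y2), d %| size (y1 ++ y2),
                    size y1 = o %[mod d] & emb d u y2].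
Proof.
move=> M G; elim=> [|a u IH] o C Hu.
- exists [::], [::]; split.
  + by rewrite /= eqxx.
  + by move=> a r [i []].
  + by rewrite /= dvdn0.
  + by rewrite mod0n; move: Hu; rewrite addn0 /dvdn => /eqP ->.
  + by apply: emb_nil.
- have Ca := compat_cons1 C.
  case: (G _ _ Ca) => s1 [s2 [Htr [z1 [R1 C1 M1]] [z2 [R2 C2 M2]]]].
  rewrite add0n in M1.
  have Hu' : d %| o.+1 + size u by rewrite addSn -addnS.
  case: (IH _ (compat_cons2 C) Hu') => y1 [y2 [Ry Cy Dy My Ey]].
  have Dz : d %| size z2 + size y1.
    rewrite (dvd_eqmod (eqmodD (erefl (size z2 %% d)) My)) addnC.
    by rewrite /dvdn M2 mod0n.
  have Mo : (0 + size z1).+1 = o.+1 %[mod d].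
    by rewrite add0n -(addn1 (size z1)) -(addn1 o); apply: eqmodD.
  exists z1, (a :: z2 ++ y1 ++ y2); split.
  + apply/run_catP; exists s1; split => //; apply/run_cons; exists s2; split => //.
    by apply/run_catP; exists q.
  + apply/compat_cat; split => //.
    apply: compat_consI => //; first by apply: M Ca; rewrite add0n M1.
    apply/compat_cat; split; first by apply: compat_mod C2; rewrite Mo.
    apply: compat_mod Cy.
    by rewrite (eqmodD Mo (erefl (size z2 %% d))) M2 mod0n.
  + rewrite size_cat /= size_cat addnS -addSn.
    have E1 : (size z1).+1 + (size z2 + size (y1 ++ y2)) = (o.+1 + size z2) + size (y1 ++ y2) %[mod d].
      by rewrite addnA; apply: eqmodD => //; apply: eqmodD => //; rewrite -(addn1 (size z1)) -(addn1 o); apply: eqmodD.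
    rewrite (dvd_eqmod E1) (dvd_eqmod (eqmodD M2 (erefl _))) add0n.
    exact: Dy.
  + by [].
  + rewrite -[a :: (z2 ++ _)]cat0s; constructor => //.
    rewrite catA; apply: emb_prepend => //.
    by rewrite size_cat.
Qed.

Lemma emb_J (S : finType) d (u x : seq S) : emb d u x ->
  exists J : nat -> nat, (forall p, p <= size u -> J p <= size x /\ J p = p %[mod d]) /\
    (forall p p', p <= p' <= size u -> J p <= J p').
Proof.
elim=> [y Hy|a u' z y Hz _ [J [HJ1 HJ2]]].
- exists (fun _ => 0); split => // p; rewrite leqn0 => /eqP ->; by [].
- exists (fun p => if p is k.+1 then size z + (J k).+1 else 0); split.
  + move=> [|k] /= Hk; first by [].
    case: (HJ1 k Hk) => H1 H2; rewrite size_cat /= leq_add2l ltnS H1; split => //.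
    by rewrite -(addn1 (J k)) -(addn1 k) (eqmod_dvdl _ Hz); apply: eqmodD.
  + move=> [|k] [|k'] //= H; rewrite leq_add2l ltnS; apply: HJ2; exact: H.
Qed.

Lemma pigeon (T : finType) n (f : nat -> T) : #|T| <= n ->
  exists p p', [/\ p < p', p' <= n & f p = f p'].
Proof.
move=> Hn; pose g := fun i : 'I_n.+1 => f i.
have : ~~ injectiveb g.
  apply/negP => /injectiveP Hinj; have := @leq_card _ _ g Hinj.
  by rewrite card_ord => H; have := leq_trans H Hn; rewrite ltnn.
case/injectivePn => i [j Hij Hg]; rewrite /g in Hg.
case: (ltngtP i j) => H.
- by exists i, j; split => //; rewrite -ltnS.
- by exists j, i; split => //; rewrite -ltnS.
- by move: Hij; rewrite (val_inj H) eqxx.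
Qed.

Lemma segs2 (S : finType) (A : nfa S) d K (q : state A) (x : seq S) :
  run q x q -> compat d K 0 x -> d %| size x ->
  exists st : nat -> state A, [/\ st 0 = q, st (size x) = q,
    forall j j', j <= j' <= size x -> Reach d K (st j) j (st j') j' &
    forall i a, i < size x -> nth a x i = a -> trans (st i) a (st i.+1)].
Proof.
move=> R C Hx; case: (run_states R) => st [H0 H1 H2]; exists st; split => //.
- move=> j j' /andP [Hjj Hj']; exists (take (j' - j) (drop j x)); split.
  + by apply: H2; rewrite Hjj.
  + by have := compat_seg (n := j' - j) (leq_trans Hjj Hj') C; rewrite add0n.
  + rewrite size_takel ?subnKC // size_drop leq_sub2r //.
- move=> i a Hi Hn.
  have Hr : run (st i) (take (i.+1 - i) (drop i x)) (st i.+1) by apply: H2; rewrite leqnSn.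
  move: Hr; rewrite subSnn (drop_nth a Hi) Hn /=.
  case/existsP => s /andP [Ht H]; move: H Ht; rewrite take0 /= => /eqP <-; exact.
Qed.

Lemma gad_from_x (S : finType) (A : nfa S) d (K K' : nat -> S -> Prop) (q : state A) (x : seq S) :
  modresp d K' -> run q x q -> compat d K 0 x -> d %| size x ->
  (forall r a, K r a -> occ d 0 x a r) -> (forall r a, K r a -> K' r a) ->
  forall r a, K r a -> exists s1 s2, [/\ trans s1 a s2, Reach d K' q 0 s1 r & Reach d K' s2 r.+1 q 0].
Proof.
move=> M' R C Hx Hocc Hsub r a Hra.
case: (segs2 R C Hx) => st [H0 H1 H2 H3].
case: (Hocc _ _ Hra) => i [Hi Hn Hm]; rewrite add0n in Hm.
exists (st i), (st i.+1); split; first exact: H3.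
- apply: (Reach_mono Hsub); rewrite -H0; apply: Reach_mod (H2 0 i _) => //.
  by rewrite /= ltnW.
- apply: (Reach_mono Hsub); rewrite -H1; apply: Reach_mod (H2 i.+1 (size x) _) => //.
  + by rewrite -(addn1 i) -(addn1 r); apply: eqmodD.
  + by rewrite mod0n (eqP Hx).
  + by rewrite Hi leqnn.
Qed.

Lemma adh_of_gadgets (S : finType) (A : nfa S) d (w : seq S) (q : state A) :
  init A = [set q] -> final A = init A -> d %| size w ->
  gadgets d (Kof d w) q -> in_adh d (lang A) (dclosure d (star w)).
Proof.
move=> Hi Hf Hw G; split; first exact: is_ideal_w.
move=> u /(char_fwd Hw) [Hu C].
have := build_adh (@occ_resp _ d 0 w) G C; rewrite add0n => /(_ Hu).
case=> y1 [y2 [R Cy Dy My Ey]]; exists (y1 ++ y2); split; first split.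
- by apply/(lang_cyc _ Hi Hf).
- exact: char_bwd.
- apply: emb_subd; apply: emb_prepend => //.
  by rewrite /dvdn My mod0n.
Qed.

Lemma occ_shift (S : finType) d o n (z : seq S) a r :
  occ d (o + n) z a (r + n) <-> occ d o z a r.
Proof.
split=> [[i [Hi Hn Hm]]|[i [Hi Hn Hm]]]; exists i; split => //; apply/eqP.
- by move/eqP: Hm; rewrite addnAC eqn_modDr.
- by rewrite addnAC eqn_modDr; apply/eqP.
Qed.

Lemma occ_rot (S : finType) d (v : seq S) n a r : n <= size v -> d %| size v ->
  occ d 0 (rot n v) a r <-> occ d 0 v a (r + n).
Proof.
move=> Hn Hv; rewrite /rot; split.
- move/occ_cat => [H|H]; rewrite -(cat_take_drop n v); apply/occ_cat.
  + by right; rewrite size_takel //; apply/occ_shift.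
  + left; move: H; rewrite add0n size_drop => H.
    have H' : occ d (size v - n + n) (take n v) a (r + n) by apply/occ_shift.
    by apply: occ_mod H' => //; rewrite subnK // (eqP Hv) mod0n.
- rewrite -{1}(cat_take_drop n v) => /occ_cat [H|H]; apply/occ_cat.
  + right; rewrite add0n size_drop.
    apply/(@occ_shift _ d (size v - n) n (take n v) a r); apply: occ_mod H => //.
    by rewrite subnK // (eqP Hv) mod0n.
  + left; move: H; rewrite size_takel // => H.
    by apply/occ_shift; exact: H.
Qed.

Lemma occ_flat (S : finType) d (L : seq (seq S)) a r :
  (forall b, b \in L -> d %| size b) ->
  occ d 0 (flatten L) a r <-> exists b, b \in L /\ occ d 0 b a r.
Proof.
elim: L => [|b L IH] HL /=.
- by split; [move/occ_nil|case=> b []].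
- have Hb : d %| size b by apply: HL; rewrite mem_head.
  have HL' : forall b', b' \in L -> d %| size b' by move=> b' Hb'; apply: HL; rewrite inE Hb' orbT.
  split.
  + move/occ_cat => [H|H]; first by exists b; rewrite mem_head.
    have : occ d 0 (flatten L) a r by apply: occ_mod H => //; rewrite add0n (eqP Hb) mod0n.
    by case/(IH HL') => b' [Hb' H']; exists b'; rewrite inE Hb' orbT.
  + case=> b' []; rewrite inE => /orP [/eqP ->|Hb'] H; apply/occ_cat; first by left.
    right; apply: occ_mod (_ : occ d 0 (flatten L) a r) => //; first by rewrite add0n (eqP Hb) mod0n.
    by apply/(IH HL'); exists b'.
Qed.

Definition wdef (S : finType) d t (v : seq S) :=
  flatten [seq rot (c * t) v | c <- iota 0 (d %/ t)].

Lemma size_wdef (S : finType) d t (v : seq S) : d %| size v -> d %| size (wdef d t v).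
Proof.
move=> Hv; rewrite /wdef; elim: (iota 0 _) => //= c s IH.
by rewrite size_cat size_rot dvdn_add.
Qed.

Lemma occ_w (S : finType) d t (v : seq S) a r : 0 < d -> 0 < t -> t %| d -> d %| size v -> 0 < size v ->
  occ d 0 (wdef d t v) a r <-> exists c, occ d 0 v a (r + c * t).
Proof.
move=> Hd Ht Htd Hv Hv0.
have Hdv : d <= size v by apply: dvdn_leq.
have Hk : 0 < d %/ t by rewrite divn_gt0 // dvdn_leq.
have HL : forall b, b \in [seq rot (c * t) v | c <- iota 0 (d %/ t)] -> d %| size b.
  by move=> b /mapP [c _ ->]; rewrite size_rot.
have Hct : forall c, c < d %/ t -> c * t <= size v.
  move=> c Hc; apply: leq_trans Hdv; rewrite -(divnK Htd) leq_mul2r.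
  by rewrite (ltnW Hc) orbT.
split.
- case/(occ_flat _ _ HL) => b [/mapP [c Hc ->]]; rewrite mem_iota add0n in Hc.
  by move/occ_rot => H; exists c; apply: H => //; apply: Hct.
- case=> c Hc; apply/(occ_flat _ _ HL).
  have Hc' : c %% (d %/ t) < d %/ t by rewrite ltn_mod.
  exists (rot (c %% (d %/ t) * t) v); split.
  + by apply: map_f; rewrite mem_iota add0n.
  + apply/occ_rot => //; first by apply: Hct.
    apply: occ_mod Hc => //; apply: eqmodD => //.
    rewrite {1}(divn_eq c (d %/ t)) mulnDl -mulnA divnK //.
    by rewrite modnMDl.
Qed.

Lemma occ_w_per (S : finType) d t (v : seq S) a r : 0 < d -> 0 < t -> t %| d -> d %| size v -> 0 < size v ->
  occ d 0 (wdef d t v) a (r + t) <-> occ d 0 (wdef d t v) a r.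
Proof.
move=> Hd Ht Htd Hv Hv0.
have Hk : 0 < d %/ t by rewrite divn_gt0 // dvdn_leq.
split.
- case/occ_w => // c H; apply/occ_w => //; exists c.+1.
  by rewrite mulSn addnA.
- case/occ_w => // c H; apply/occ_w => //; exists (c + (d %/ t).-1).
  apply: occ_mod H => //.
  have E : r + t + (c + (d %/ t).-1) * t = r + c * t + (d %/ t) * t.
    have -> : d %/ t * t = t + (d %/ t).-1 * t by rewrite -mulSn prednK.
    rewrite mulnDl; lia.
  by rewrite E divnK // modnDr.
Qed.

Lemma kappa_occ (S : finType) d (w : seq S) i a : 0 < d ->
  a \in kappa d w i <-> occ d 0 w a (i + d.-1).
Proof.
move=> Hd.
have E : forall p, (p.+1 == i %[mod d]) = (p == i + d.-1 %[mod d]).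
  move=> p; rewrite -(eqn_modDr d.-1) addSn -addnS prednK //.
  by rewrite modnDr.
rewrite inE; split.
- case/existsP => p /andP [/eqP Hp Hm]; exists p; split => //.
  + by move: Hp; rewrite (tnth_nth a).
  + by apply/eqP; rewrite add0n -E.
- case=> p [Hp Hn Hm]; apply/existsP; exists (Ordinal Hp).
  by rewrite (tnth_nth a) /= Hn eqxx /= E; apply/eqP; rewrite -Hm add0n.
Qed.

Lemma head_le (P : pred nat) x0 n a0 t : a0 <= t < a0 + n -> P t ->
  head x0 [seq y <- iota a0 n | P y] <= t.
Proof.
elim: n a0 => [|n IH] a0; first by rewrite addn0 => /andP [H1 H2]; move: (leq_ltn_trans H1 H2); rewrite ltnn.
move=> /andP [H1 H2] Pt /=; case: ifP => // Pa.
apply: IH => //; rewrite addSnnS H2 andbT ltn_neqAle H1 andbT.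
by apply/eqP => E; rewrite E Pt in Pa.
Qed.

Lemma pi_le (S : finType) d (w : seq S) t : 0 < d -> 0 < t -> t %| d ->
  (forall a r, occ d 0 w a (r + t) <-> occ d 0 w a r) -> pi_d d w <= t.
Proof.
move=> Hd Ht Htd Hper; rewrite /pi_d; apply: head_le.
- by rewrite Ht add1n ltnS dvdn_leq.
- rewrite Htd /=; apply/allP => i _; apply/eqP/setP => a.
  apply/idP/idP => /kappa_occ H; apply/kappa_occ => //.
  + by apply/(Hper a (i + d.-1)); rewrite addnAC; apply: H.
  + by rewrite addnAC; apply/Hper; apply: H.
Qed.

Theorem mainTheorem14 (S : finType) (A1 A2 : nfa S) (m d : nat) (v : seq S) :
  cyclic_nfa A1 -> cyclic_nfa A2 ->
  #|state A1| <= m -> #|state A2| <= m ->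
  0 < d -> (m ^ 2)`! %| d ->
  d %| size v ->
  in_adh d (lang A1) (dclosure d (star v)) ->
  in_adh d (lang A2) (dclosure d (star v)) ->
  exists w : seq S,
    [/\ d %| size w,
        (forall u, dclosure d (star v) u -> dclosure d (star w) u),
        in_adh d (lang A1) (dclosure d (star w)) /\ in_adh d (lang A2) (dclosure d (star w))
      & pi_d d w <= m ^ 2].
Proof.
move=> [q1 [Hi1 Hf1]] [q2 [Hi2 Hf2]] Hm1 Hm2 Hd Hfact Hv Adh1 Adh2.
have Hm0 : 0 < m.
  apply: leq_trans Hm1; apply/card_gt0P; by exists q1.
have Hm20 : 0 < m ^ 2 by rewrite expn_gt0 Hm0.
case: (posnP (size v)) => Hv0.
-
  exists v; split => //.
  apply: leq_trans Hm20; apply: pi_le => // a r.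
  by move/eqP: Hv0; rewrite size_eq0 => /eqP ->; split => /occ_nil.
have Hdv : d <= size v by apply: dvdn_leq.
have Hm2d : m ^ 2 <= d by apply: leq_trans (fact_geq _) (dvdn_leq Hd Hfact).
have vin : dclosure d (star v) v.
  apply: char_bwd => //.
case: Adh2 => _ /(_ v vin) [x2 [[L2 Dx2] /subd_emb Ev2]].
case: (char_fwd Hv Dx2) => Hx2 Cx2.
case: Adh1 => _ /(_ x2 Dx2) [x1 [[L1 Dx1] /subd_emb E21]].
case: (char_fwd Hv Dx1) => Hx1 Cx1.
move/(lang_cyc _ Hi1 Hf1): L1 => R1.
move/(lang_cyc _ Hi2 Hf2): L2 => R2.
case: (segs2 R1 Cx1 Hx1) => st1 [H10 H11 H12 H13].
case: (segs2 R2 Cx2 Hx2) => st2 [H20 H21 H22 H23].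
case: (emb_J E21) => J [HJ1 HJ2].
have Hsx2 : m ^ 2 <= size x2.
  by apply: leq_trans Hm2d (leq_trans Hdv _); case: (emb_size Ev2).
have Hcard : #|{: state A1 * state A2}| <= m ^ 2.
  by rewrite card_prod expnS expn1 leq_mul.
case: (pigeon (fun p => (st1 (J p), st2 p)) Hcard) => p [p' [Hpp' Hp' [E1 E2]]].
set t := p' - p.
have Ht0 : 0 < t by rewrite subn_gt0.
have Htm : t <= m ^ 2 by apply: leq_trans (leq_subr _ _) Hp'.
have Htd : t %| d by apply: dvdn_trans (dvdn_fact _) Hfact; rewrite Ht0.
set w := wdef d t v.
have Hw : d %| size w by apply: size_wdef.
have Mv := @occ_resp _ d 0 v.
have Mw := @occ_resp _ d 0 w.
have Hsub : forall r a, Kof d v r a -> Kof d w r a.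
  by move=> r a H; apply/occ_w => //; exists 0; rewrite addn0.
have Per : forall r a, Kof d w r a -> Kof d w (r + t) a.
  by move=> r a H; apply/occ_w_per.
have Back : forall r a, Kof d w r a -> exists c, Kof d v (r + c * t) a.
  by move=> r a /occ_w; apply.
have Hp'x2 : p' <= size x2 by apply: leq_trans Hp' Hsx2.
have Hpx2 : p <= size x2 by apply: leq_trans (ltnW Hpp') Hp'x2.
have G1 : gadgets d (Kof d w) q1.
  apply: (core Hd Ht0 Htd Mw Per Back).
  - apply: (gad_from_x Mw R1 Cx1 Hx1) => // r a H.
    by apply: (emb_occ E21); apply: (emb_occ Ev2).
  - case: (HJ1 p Hpx2) => HJp HJpm; case: (HJ1 p' Hp'x2) => HJp' HJp'm.
    exists (st1 (J p)), (J p); split.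
    + apply: (Reach_mono Hsub); rewrite -H10; apply: H12.
      by rewrite HJp.
    + apply: (Reach_mono Hsub); rewrite -H11; apply: Reach_mod (H12 (J p) (size x1) _) => //.
      * by rewrite mod0n (eqP Hx1).
      * by rewrite HJp leqnn.
    + apply: (Reach_mono Hsub); rewrite {2}E1; apply: Reach_mod (H12 (J p) (J p') _) => //.
      * rewrite HJp'm /t -modnDml HJpm modnDml.
        by rewrite subnKC // ltnW.
      * by rewrite HJ2 ?HJp' // (ltnW Hpp') Hp'x2.
have G2 : gadgets d (Kof d w) q2.
  apply: (core Hd Ht0 Htd Mw Per Back).
  - apply: (gad_from_x Mw R2 Cx2 Hx2) => // r a H.
    by apply: (emb_occ Ev2).
  - exists (st2 p), p; split.
    + apply: (Reach_mono Hsub); rewrite -H20; apply: H22.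
      by rewrite Hpx2.
    + apply: (Reach_mono Hsub); rewrite -H21; apply: Reach_mod (H22 p (size x2) _) => //.
      * by rewrite mod0n (eqP Hx2).
      * by rewrite Hpx2 leqnn.
    + apply: (Reach_mono Hsub); rewrite {2}E2; rewrite /t subnKC ?(ltnW Hpp') //.
      by apply: H22; rewrite (ltnW Hpp') Hp'x2.
exists w; split => //.
- move=> u /(char_fwd Hv) [Hu Cu]; apply: char_bwd => //.
  by move=> a r H; apply: Hsub; apply: Cu.
- by split; [apply: (adh_of_gadgets Hi1 Hf1 Hw G1)|apply: (adh_of_gadgets Hi2 Hf2 Hw G2)].
- apply: leq_trans Htm; apply: pi_le => // a r.
  exact: occ_w_per.
Qed.
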